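(* Let $L$ be an $n\times n$ nonsingular M-matrix with integer entries. If $f\in\mathbb{Z}^n$ is $z$-superstable with respect to $L$, then $D^L-f$ is a critical configuration of $L$.
   Context: A Z-matrix is a square real matrix whose off-diagonal entries are all $\le 0$. A nonsingular M-matrix is a Z-matrix $L$ that is invertible with $L^{-1}$ having all entries nonnegative (its diagonal entries are then positive). Vector inequalities are entrywise; $e_i$ is the $i$th standard basis vector. A vector $f\in\mathbb{Z}^n$ with $f\ge0$ is $z$-superstable if for every $z\in\mathbb{Z}^n$ with $z\ge0$, $z\ne0$, there is $i$ with $f_i-(Lz)_i<0$. $D^L\in\mathbb{Z}^n$ is defined by $D^L_i=L_{ii}-1$. A vector $c\in\mathbb{Z}^n$ is stable if $c_i<L_{ii}$ for all $i$ (i.e. $c\le D^L$). A vector $c\in\mathbb{Z}^n$ is a critical configuration if it is stable and there exist $g\in\mathbb{Z}^n$ with $g_i\ge L_{ii}$ for all $i$ and indices $i_1,\dots,i_k$ such that $c=g-\sum_{j=1}^kLe_{i_j}$ and, writing $g^\ell=g-\sum_{j=1}^\ell Le_{i_j}$ ($g^0=g$), one has $g^\ell_{i_{\ell+1}}\ge L_{i_{\ell+1}i_{\ell+1}}$ for all $0\le\ell<k$ (each firing in the sequence is legal). *)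

(* Defs.v *)
From HB Require Import structures.
From mathcomp Require Import all_boot all_order all_algebra.
Set Implicit Arguments. Unset Strict Implicit. Unset Printing Implicit Defensive.
Import Order.TTheory GRing.Theory Num.Theory.
Local Open Scope ring_scope.

Definition Zmatrix (n : nat) (L : 'M[int]_n) : Prop :=
  forall i j : 'I_n, i != j -> L i j <= 0.

(* Nonsingular M-matrix (integer entries): a Z-matrix, invertible (over the
   rationals, i.e. as a real matrix), whose inverse has nonnegative entries. *)
Definition nonsingular_Mmatrix (n : nat) (L : 'M[int]_n) : Prop :=
  Zmatrix L /\
  let Lq : 'M[rat]_n := map_mx (fun x : int => x%:~R) L in
  Lq \in unitmx /\ forall i j : 'I_n, 0 <= invmx Lq i j.

Definition evec (n : nat) (i : 'I_n) : 'cV[int]_n := delta_mx i 0.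

Definition z_superstable (n : nat) (L : 'M[int]_n) (f : 'cV[int]_n) : Prop :=
  (forall i, 0 <= f i 0) /\
  forall z : 'cV[int]_n, (forall i, 0 <= z i 0) -> z != 0 ->
    exists i, f i 0 - (L *m z) i 0 < 0.

Definition DL (n : nat) (L : 'M[int]_n) : 'cV[int]_n := \col_i (L i i - 1).

Definition stable (n : nat) (L : 'M[int]_n) (c : 'cV[int]_n) : Prop :=
  forall i, c i 0 < L i i.

Definition fire_seq (n : nat) (L : 'M[int]_n) (g : 'cV[int]_n) (s : seq 'I_n)
  : 'cV[int]_n := g - \sum_(i <- s) L *m evec i.

Definition legal_seq (n : nat) (L : 'M[int]_n) (g : 'cV[int]_n) (s : seq 'I_n)
  : Prop :=
  forall (l : nat) (Hl : (l < size s)%N),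
    let i := tnth (in_tuple s) (Ordinal Hl) in
    L i i <= fire_seq L g (take l s) i 0.

Definition critical (n : nat) (L : 'M[int]_n) (c : 'cV[int]_n) : Prop :=
  stable L c /\
  exists (g : 'cV[int]_n) (s : seq 'I_n),
    (forall i, L i i <= g i 0) /\ legal_seq L g s /\ c = fire_seq L g s.

(* Main.v *)
Require Import Defs.
From HB Require Import structures.
From mathcomp Require Import all_boot all_order all_algebra.
From mathcomp Require Import zify.
Import Order.TTheory GRing.Theory Num.Theory.
Local Open Scope ring_scope.
Set Implicit Arguments. Unset Strict Implicit.

Lemma step_exists (n : nat) (L : 'M[int]_n) (f w : 'cV[int]_n) :
  Zmatrix L -> z_superstable L f -> (forall i, 0 <= w i 0) -> w != 0 ->
  exists i, 0 < w i 0 /\ L i i <= (DL L - f + L *m w) i 0.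
Proof.
move=> zL [f0 sf] w0 wn0.
case: (boolP [exists i, (0 < w i 0) && (L i i <= (DL L - f + L *m w) i 0)]).
  by move=> /existsP [i /andP[H1 H2]]; exists i.
move=> /existsPn H; exfalso.
have [i Hi] := sf w w0 wn0.
move: (H i) (f0 i) (w0 i) Hi; rewrite negb_and -!ltNge !mxE.
set a := (\sum_j _)%R.
case: (ltP 0 (w i 0)) => Hw /=; first by lia.
move=> _ fi wi.
have wi0 : w i 0 = 0 by apply/eqP; rewrite eq_le Hw wi.
have : a <= 0.
  rewrite /a (bigD1 i) //=.
  rewrite wi0 mulr0 add0r; apply: sumr_le0 => j Hj.
  by apply: mulr_le0_ge0; [apply: zL; rewrite eq_sym | apply: w0].
lia.
Qed.

Lemma legal_rcons (n : nat) (L : 'M[int]_n) (g : 'cV[int]_n) s i :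
  legal_seq L g s -> L i i <= fire_seq L g s i 0 -> legal_seq L g (rcons s i).
Proof.
move=> Hs Hi l Hl /=.
rewrite (tnth_nth i) /= nth_rcons -cats1 take_cat.
case: (ltnP l (size s)) => Hls.
  have := Hs l Hls; by rewrite /= (tnth_nth i).
move: Hl; rewrite size_rcons ltnS => Hl2.
have -> : l = size s by apply/eqP; rewrite eqn_leq Hl2 Hls.
by rewrite subnn take0 cats0 /= eqxx.
Qed.

Lemma fire_rcons (n : nat) (L : 'M[int]_n) (g : 'cV[int]_n) s i :
  fire_seq L g (rcons s i) = fire_seq L g s - L *m evec i.
Proof. by rewrite /fire_seq big_rcons /= opprD addrA. Qed.

Lemma run (n : nat) (L : 'M[int]_n) (f g : 'cV[int]_n) :
  Zmatrix L -> z_superstable L f ->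
  forall (k : nat) (w : 'cV[int]_n) s, (forall i, 0 <= w i 0) ->
  \sum_i w i 0 = k%:Z -> fire_seq L g s = DL L - f + L *m w ->
  legal_seq L g s ->
  exists s', legal_seq L g s' /\ fire_seq L g s' = DL L - f.
Proof.
move=> zL sf; elim=> [|k IH] w s w0 ws fs ls.
  have w00 : w = 0.
    apply/matrixP => i j; rewrite (ord1 j) mxE; apply/eqP; rewrite eq_le w0 andbT.
    have : \sum_(i0 < n) w i0 0 >= w i 0.
      rewrite (bigD1 i) //= lerDl; exact: sumr_ge0.
    by rewrite ws.
  by exists s; rewrite fs w00 mulmx0 addr0.
case: (eqVneq w 0) => [w00 | wn0].
  by exists s; rewrite fs w00 mulmx0 addr0.
have [i [wi Hi]] := step_exists zL sf w0 wn0.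
apply: (IH (w - evec i) (rcons s i)).
- move=> j; rewrite !mxE; case: (eqVneq j i) => [->|ne] /=.
    lia.
  rewrite subr0; exact: w0.
- rewrite (eq_bigr (fun j => w j 0 - (j == i)%:R)); last first.
    by move=> j _; rewrite !mxE andbT.
  rewrite sumrB ws (bigD1 i) //= eqxx big1 ?addr0; first by lia.
  by move=> j /negbTE ->.
- by rewrite fire_rcons fs mulmxBr addrA.
- by apply: legal_rcons => //; rewrite fs.
Qed.

Theorem mainTheorem12 (n : nat) (L : 'M[int]_n) (f : 'cV[int]_n) :
  nonsingular_Mmatrix L -> z_superstable L f -> critical L (DL L - f).
Proof.
move=> [zL [uL invL]] sf.
have f0 := proj1 sf.
split.
  move=> i; rewrite !mxE -addrA gtrDl subr_lt0; exact: lt_le_trans (f0 i).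
set Lq : 'M[rat]_n := map_mx (fun x : int => x%:~R) L in uL invL.
set d := \det L.
have dq : \det Lq = d%:~R.
  rewrite /Lq /d; exact: det_map_mx.
have dn0 : d != 0.
  by move: uL; rewrite unitmxE dq unitfE intr_eq0.
set u : 'cV[int]_n := \col_i (1 + f i 0).
have u0 : forall i, 0 <= u i 0 by move=> i; rewrite mxE; have := f0 i; lia.
set z : 'cV[int]_n := Num.sg d *: (\adj L *m u).
have Lz : L *m z = `|d| *: u.
  by rewrite /z -scalemxAr mulmxA mul_mx_adj mul_scalar_mx scalerA normrEsg.
have zq : map_mx intr z = (`|d|)%:~R *: (invmx Lq *m map_mx intr u).
  rewrite /z map_mxZ map_mxM map_mx_adj /invmx uL -scalemxAl scalerA.
  change (map_mx intr L) with Lq.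
  congr (_ *: _); rewrite dq normrEsg rmorphM /= -mulrA mulfV ?mulr1 //.
  by rewrite intr_eq0.
have z0 : forall i, 0 <= z i 0.
  move=> i; move/matrixP: zq => /(_ i 0); rewrite !mxE => e.
  rewrite -(ler0z rat) e; apply: mulr_ge0; first by rewrite ler0z.
  apply: sumr_ge0 => j _; rewrite mxE; apply: mulr_ge0; first exact: invL.
  by rewrite ler0z.
set g := DL L - f + L *m z.
have [s [ls fs]] : exists s', legal_seq L g s' /\ fire_seq L g s' = DL L - f.
  apply: (@run _ L f g zL sf `|(\sum_i z i 0)%R|%N z [::] z0).
  - rewrite gez0_abs //; exact: sumr_ge0.
  - by rewrite /fire_seq big_nil subr0.
  - by move=> l Hl.
exists g, s; split; last by split.
move=> i; rewrite /g Lz !mxE.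
have fi := f0 i; have d1 : 0 < `|d| by rewrite normr_gt0.
have h : 1 + f i 0 <= `|d| * (1 + f i 0).
  by rewrite ler_peMl //; lia.
have -> : L i i - 1 - f i 0 = L i i - (1 + f i 0) by rewrite opprD addrA.
by rewrite -addrA lerDl addrC subr_ge0.
Qed.
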